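(* Let $f:(K,\alpha_K)\to(L,\alpha_L)$ be a central extension of a perfect Hom-Leibniz $n$-algebra $(L,\alpha_L)$ with $\alpha_L$ injective, and suppose $(K,\alpha_K)$ satisfies condition (C): $[\alpha_K(k),\alpha_K(k),\alpha_K(k_3),\dots,\alpha_K(k_n)]=0$ for all $k,k_3,\dots,k_n\in K$. Then $f(Z(\alpha_K(K)))=Z(\alpha_L(L))$.
   Context: Fix a field $\mathbb K$ and $n\ge2$. A (multiplicative) Hom-Leibniz $n$-algebra is a $\mathbb K$-vector space $L$ with an $n$-linear bracket and a linear map $\alpha_L$ preserving the bracket, satisfying $[[x_1,\dots,x_n],\alpha_L(y_1),\dots,\alpha_L(y_{n-1})]=\sum_{i=1}^n[\alpha_L(x_1),\dots,[x_i,y_1,\dots,y_{n-1}],\dots,\alpha_L(x_n)]$. Homomorphisms preserve brackets and commute with twisting maps. Perfect: $L=[L,\dots,L]$. For a subspace $S$ closed under the bracket, $Z(S)$ is the set of $x\in S$ such that every bracket with $x$ in some position and all other entries in $S$ is $0$; $Z(\alpha_K(K))$ and $Z(\alpha_L(L))$ are computed inside the subalgebras $\alpha_K(K)$, $\alpha_L(L)$. A central extension of $L$ is a surjective homomorphism $f:K\to L$ with $\ker f\subseteq Z(K)$. *)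

(* Defs.v *)
From HB Require Import structures.
From mathcomp Require Import all_boot all_order all_algebra.
Set Implicit Arguments. Unset Strict Implicit. Unset Printing Implicit Defensive.
Import GRing.Theory.
Local Open Scope ring_scope.

Section HomLeibniz.
Variables (F : fieldType) (n : nat).

Definition upd (V : Type) (x : {ffun 'I_n -> V}) (i : 'I_n) (v : V)
  : {ffun 'I_n -> V} := [ffun j => if j == i then v else x j].

(* the n-tuple (v, y_1, ..., y_{n-1}) built from v and an (n-1)-tuple y *)
Definition consf (V : Type) (v : V) (y : {ffun 'I_n.-1 -> V})
  : {ffun 'I_n -> V} :=
  [ffun j : 'I_n => if val j == 0%N then v
                    else odflt v (omap y (insub (val j).-1))].

Definition is_linear_map (V W : lmodType F) (g : V -> W) : Prop :=
  forall (a : F) (u v : V), g (a *: u + v) = a *: g u + g v.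

Definition multilinear (V : lmodType F) (br : {ffun 'I_n -> V} -> V) : Prop :=
  forall (x : {ffun 'I_n -> V}) (i : 'I_n), is_linear_map (fun v => br (upd x i v)).

Definition HomLeibniz (V : lmodType F) (br : {ffun 'I_n -> V} -> V)
    (al : V -> V) : Prop :=
  [/\ multilinear br,
      is_linear_map al,
      (forall x : {ffun 'I_n -> V}, al (br x) = br [ffun j => al (x j)]) &
      (forall (x : {ffun 'I_n -> V}) (y : {ffun 'I_n.-1 -> V}),
         br (consf (br x) [ffun j => al (y j)])
         = \sum_(i < n) br [ffun j => if j == i then br (consf (x i) y)
                                       else al (x j)])].

Definition HomLeibniz_hom (V W : lmodType F)
    (brV : {ffun 'I_n -> V} -> V) (alV : V -> V)
    (brW : {ffun 'I_n -> W} -> W) (alW : W -> W) (f : V -> W) : Prop :=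
  [/\ is_linear_map f,
      (forall x : {ffun 'I_n -> V}, f (brV x) = brW [ffun j => f (x j)]) &
      (forall v, f (alV v) = alW (f v))].

Definition perfect (V : lmodType F) (br : {ffun 'I_n -> V} -> V) : Prop :=
  forall v : V, exists s : seq (F * {ffun 'I_n -> V}),
    v = \sum_(p <- s) p.1 *: br p.2.

(* Z(S) for a subspace S closed under the bracket, computed inside S *)
Definition centre_in (V : lmodType F) (br : {ffun 'I_n -> V} -> V)
    (S : V -> Prop) (x : V) : Prop :=
  S x /\ forall (i : 'I_n) (z : {ffun 'I_n -> V}),
           (forall j, S (z j)) -> br (upd z i x) = 0.

Definition image_of (V : Type) (al : V -> V) : V -> Prop :=
  fun v => exists k, v = al k.

Definition central_extension (V W : lmodType F)
    (brV : {ffun 'I_n -> V} -> V) (alV : V -> V)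
    (brW : {ffun 'I_n -> W} -> W) (alW : W -> W) (f : V -> W) : Prop :=
  [/\ HomLeibniz_hom brV alV brW alW f,
      (forall w : W, exists v, f v = w) &
      (forall v : V, f v = 0 -> centre_in brV (fun _ => True) v)].

Definition condC (V : lmodType F) (br : {ffun 'I_n -> V} -> V) (al : V -> V)
  : Prop :=
  forall (k : V) (z : {ffun 'I_n -> V}),
    br [ffun j : 'I_n => if (val j < 2)%N then al k else al (z j)] = 0.

End HomLeibniz.

(* Main.v *)
Require Import Defs.
From HB Require Import structures.
From mathcomp Require Import all_boot all_order all_algebra ring.
Import GRing.Theory.
Local Open Scope ring_scope.
Set Implicit Arguments. Unset Strict Implicit.

Section Lin.
Variables (F : fieldType) (V W : lmodType F) (g : V -> W).
Hypothesis hg : is_linear_map g.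
Lemma lin0 : g 0 = 0.
Proof. have h := hg 1 0 0; rewrite !scale1r addr0 in h.
by apply: (@addrI _ (g 0)); rewrite addr0 -h. Qed.
Lemma linD u v : g (u + v) = g u + g v.
Proof. by rewrite -{1}(scale1r u) hg scale1r. Qed.
Lemma linZ a u : g (a *: u) = a *: g u.
Proof. by rewrite -(addr0 (a *: u)) hg lin0 addr0. Qed.
Lemma linN u : g (- u) = - g u.
Proof. by rewrite -scaleN1r linZ scaleN1r. Qed.
Lemma linB u v : g (u - v) = g u - g v.
Proof. by rewrite linD linN. Qed.
End Lin.

Section Tup.
Variable (n' : nat).
Local Notation N := n'.+2.
Lemma consf_lift (V : Type) (u : V) (Y : {ffun 'I_N.-1 -> V}) j :
  consf u Y (lift ord0 j) = Y j.
Proof. by rewrite ffunE /= add0n valK. Qed.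
Lemma consf0 (V : Type) (u : V) (Y : {ffun 'I_N.-1 -> V}) :
  consf u Y ord0 = u.
Proof. by rewrite ffunE. Qed.
Lemma decomp (V : Type) (t : {ffun 'I_N -> V}) :
  t = consf (t ord0) [ffun j => t (lift ord0 j)].
Proof.
apply/ffunP => j; case: (unliftP ord0 j) => [j'|] ->.
  by rewrite consf_lift ffunE.
by rewrite consf0.
Qed.
Lemma consf_map (V W : Type) (g : V -> W) (u : V) (Y : {ffun 'I_N.-1 -> V}) :
  [ffun j => g (consf u Y j)] = consf (g u) [ffun j => g (Y j)].
Proof.
apply/ffunP => j; rewrite ffunE; case: (unliftP ord0 j) => [j'|] ->.
  by rewrite !consf_lift ffunE.
by rewrite !consf0.
Qed.
Lemma consf_upd (V : Type) (u u0 : V) (Y : {ffun 'I_N.-1 -> V}) :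
  consf u Y = upd (consf u0 Y) ord0 u.
Proof.
apply/ffunP => j; rewrite [RHS]ffunE; case: (unliftP ord0 j) => [j'|] ->.
  by rewrite !consf_lift.
by rewrite !consf0 eqxx.
Qed.
Lemma upd_id (V : Type) (x : {ffun 'I_N -> V}) i : upd x i (x i) = x.
Proof. by apply/ffunP => j; rewrite ffunE; case: eqP => // ->. Qed.
End Tup.

Section Main.
Variables (F : fieldType) (n' : nat) (K L : lmodType F)
  (brK : {ffun 'I_n'.+2 -> K} -> K) (alK : K -> K)
  (brL : {ffun 'I_n'.+2 -> L} -> L) (alL : L -> L) (f : K -> L).
Hypotheses (HK : HomLeibniz brK alK) (HL : HomLeibniz brL alL)
  (Hp : perfect brL) (Hinj : injective alL)
  (Hce : central_extension brK alK brL alL f) (HC : condC brK alK).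

Let HKml : multilinear brK. Proof. by case: HK. Qed.
Let HKal : is_linear_map alK. Proof. by case: HK. Qed.
Let HKh x : alK (brK x) = brK [ffun j => alK (x j)]. Proof. by case: HK. Qed.
Let HKlb := let: And4 _ _ _ h := HK in h.
Let HLal : is_linear_map alL. Proof. by case: HL. Qed.
Let HLh x : alL (brL x) = brL [ffun j => alL (x j)]. Proof. by case: HL. Qed.
Let Hfl : is_linear_map f. Proof. by case: Hce => -[]. Qed.
Let Hfh x : f (brK x) = brL [ffun j => f (x j)]. Proof. by case: Hce => -[]. Qed.
Let Hfa v : f (alK v) = alL (f v). Proof. by case: Hce => -[]. Qed.
Let Hsurj w : exists v, f v = w. Proof. by case: Hce => _ h _; apply: h. Qed.
Let Hker v : f v = 0 -> centre_in brK (fun _ => True) v. Proof. by case: Hce => _ _; apply. Qed.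

Lemma keyG (l : L) (k : K) (hl : centre_in brL (image_of alL) (alL l))
  (hk : f k = l) (i' : 'I_n'.+1) (z : {ffun 'I_n'.+2 -> K})
  (hz : z (lift ord0 i') = k) : brK [ffun j => alK (z j)] = 0.
Proof.
set Y := [ffun j => z (lift ord0 j)].
rewrite {1}(decomp z) consf_map -/Y.
set Phi := fun u => brK (consf (alK u) [ffun j => alK (Y j)]).
suff: forall u, Phi u = 0 by apply.
have Philin a u v : Phi (a *: u + v) = a *: Phi u + Phi v.
  rewrite /Phi HKal (consf_upd _ 0) HKml.
  by rewrite -(consf_upd _ 0) -(consf_upd _ 0).
have Phibr q : Phi (brK q) = 0.
  rewrite /Phi HKh HKlb; apply: big1 => m _.
  set c := brK (consf _ Y).
  have fc : f c = 0.
    apply: Hinj; rewrite (lin0 HLal) Hfh consf_map HLh.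
    set T := [ffun j => alL _].
    rewrite -(upd_id T (lift ord0 i')).
    have -> : T (lift ord0 i') = alL l.
      by rewrite /T ffunE consf_lift !ffunE hz hk.
    case: hl => _; apply=> j; rewrite /T ffunE.
    by eexists.
  have := (Hker fc).2 m [ffun j => alK ([ffun j0 => alK (q j0)] j)] (fun _ => I).
  move=> <-; congr (brK _); apply/ffunP => j; rewrite !ffunE.
  by case: eqP.
move=> u; have [s hs] := Hp (f u).
elim: s u hs => [|p s IH] u.
  rewrite big_nil => /Hker [_ hc].
  rewrite /Phi -consf_map -HKh (consf_upd u 0) hc //; exact: lin0.
rewrite big_cons => hu.
have [q hq] : exists q : {ffun 'I_n'.+2 -> K}, forall j, f (q j) = p.2 j.
  have [g hg] := fin_all_exists (fun j => Hsurj (p.2 j)).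
  by exists [ffun j => g j] => j; rewrite ffunE.
have -> : u = p.1 *: brK q + (u - p.1 *: brK q) by rewrite addrC subrK.
rewrite Philin Phibr scaler0 add0r; apply: IH.
rewrite (linB Hfl) (linZ Hfl) Hfh hu.
have -> : [ffun j => f (q j)] = p.2 by apply/ffunP => j; rewrite ffunE hq.
by rewrite addrC addKr.
Qed.

Let o1 : 'I_n'.+2 := lift ord0 (ord0 : 'I_n'.+1).

Lemma antisym (z : {ffun 'I_n'.+2 -> K}) :
  brK [ffun j => alK (z j)] = - brK [ffun j => alK (z (if j == ord0 then o1 else if j == o1 then ord0 else j))].
Proof.
set B := fun u v => brK [ffun j => if j == ord0 then u else if j == o1 then v
                                   else alK (z j)].
have o10 : (o1 == ord0) = false by [].
have Bl a u u' v : B (a *: u + u') v = a *: B u v + B u' v.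
  have e w : B w v = brK (upd [ffun j => if j == o1 then v else alK (z j)] ord0 w).
    by congr (brK _); apply/ffunP => j; rewrite !ffunE.
  by rewrite !e HKml.
have Br a u v v' : B u (a *: v + v') = a *: B u v + B u v'.
  have e w : B u w = brK (upd [ffun j => if j == ord0 then u else alK (z j)] o1 w).
    congr (brK _); apply/ffunP => j; rewrite !ffunE.
    by case: (eqVneq j ord0) => [->|]; rewrite ?o10 //; case: eqP.
  by rewrite !e HKml.
have Bd w : B (alK w) (alK w) = 0.
  rewrite -(HC w z); congr (brK _); apply/ffunP => j; rewrite !ffunE.
  by case: j => [[|[|m]] hm].
have BD u v : B (alK u) (alK v) = - B (alK v) (alK u).
  have h := Bd (u + v).
  have BlD x x' y : B (x + x') y = B x y + B x' y by rewrite -{1}(scale1r x) Bl scale1r.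
  have BrD x y y' : B x (y + y') = B x y + B x y' by rewrite -{1}(scale1r y) Br scale1r.
  rewrite (linD HKal) BlD !BrD !Bd add0r addr0 in h.
  by apply/eqP; rewrite -addr_eq0 h.
have -> : [ffun j => alK (z j)] = [ffun j => if j == ord0 then alK (z ord0)
    else if j == o1 then alK (z o1) else alK (z j)].
  by apply/ffunP => j; rewrite !ffunE; case: (eqVneq j ord0) => [->|] //; case: (eqVneq j o1) => [->|].
rewrite -/(B _ _) BD; congr (- brK _); apply/ffunP => j; rewrite !ffunE.
by rewrite !(fun_if (fun x => alK (z x))).
Qed.

Lemma main_aux (y : L) :
  (exists x : K, centre_in brK (image_of alK) x /\ f x = y)
  <-> centre_in brL (image_of alL) y.
Proof.
split.
  move=> [x [[[k0 ex] hx] fx]]; split.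
    by exists (f k0); rewrite -fx ex Hfa.
  move=> i z hz.
  have h : forall j, exists k : K, f (alK k) = z j.
    move=> j; have [l ->] := hz j.
    have [k hk] := Hsurj l; by exists k; rewrite Hfa hk.
  have [kz hkz] := fin_all_exists h.
  have -> : upd z i y = [ffun j => f (upd [ffun j => alK (kz j)] i x j)].
    by apply/ffunP => j; rewrite !ffunE; case: eqP => _; rewrite ?fx ?ffunE ?hkz.
  rewrite -Hfh hx; first exact: lin0.
  by move=> j; exists (kz j); rewrite ffunE.
move=> hy; have [l ey] := hy.1.
have [k hk] := Hsurj l.
exists (alK k); split; last by rewrite Hfa hk ey.
split; first by exists k.
move=> i z hz.
have [kz hkz] := fin_all_exists hz.
set zeta := [ffun j => if j == i then k else kz j].
have -> : upd z i (alK k) = [ffun j => alK (zeta j)].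
  by apply/ffunP => j; rewrite !ffunE; case: eqP => _; rewrite ?hkz.
have hl : centre_in brL (image_of alL) (alL l) by rewrite -ey.
case: (unliftP ord0 i) => [i' ei|ei].
  by apply: (keyG hl hk (i' := i')); rewrite ffunE -ei eqxx.
rewrite antisym; apply/eqP; rewrite oppr_eq0; apply/eqP.
pose z' := [ffun j => zeta (if j == ord0 then o1 else if j == o1 then ord0 else j)].
have -> : [ffun j => alK (zeta (if j == ord0 then o1 else if j == o1 then ord0 else j))]
  = [ffun j => alK (z' j)] by apply/ffunP => j; rewrite !ffunE.
apply: (keyG hl hk (i' := ord0)).
by rewrite ffunE -/o1 (negbTE (_ : o1 != ord0)) // eqxx ffunE ei eqxx.
Qed.
End Main.

Theorem proposition5p4 (F : fieldType) (n : nat) (hn : (2 <= n)%N)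
    (K L : lmodType F)
    (brK : {ffun 'I_n -> K} -> K) (alK : K -> K)
    (brL : {ffun 'I_n -> L} -> L) (alL : L -> L) (f : K -> L) :
  HomLeibniz brK alK -> HomLeibniz brL alL ->
  perfect brL -> injective alL ->
  central_extension brK alK brL alL f ->
  condC brK alK ->
  forall y : L,
    (exists x : K, centre_in brK (image_of alK) x /\ f x = y)
    <-> centre_in brL (image_of alL) y.
Proof.
case: n hn brK brL => [|[|n']] // _ brK brL HK HL Hp Hinj Hce HC y.
exact: (main_aux HK HL Hp Hinj Hce HC y).
Qed.
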